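(* Let $LS(n,k)$ be defined by $LS(0,0)=1$, $LS(n,k)=0$ if $k<0$ or $k>n$ (and $LS(n,k)=0$ for $n<0$), and $$LS(n,k)=(k^2+k)\,LS(n-1,k)+LS(n-1,k-1)\qquad (n\ge 1).$$ Then for every $n\ge 0$ the sequence $(LS(n,k))_{k}$ is log-concave in $k$.
   Context: A sequence $(a_k)$ is log-concave if $a_k^2\ge a_{k-1}a_{k+1}$ for all $k$. *)

(* Defs.v *)
From mathcomp Require Import all_boot.
Set Implicit Arguments. Unset Strict Implicit. Unset Printing Implicit Defensive.

(* LS n k for n, k naturals; negative k gives 0 by convention (handled by
   the k = 0 case of the recursion: LS(n-1, -1) = 0). *)
Fixpoint LS (n k : nat) : nat :=
  match n with
  | 0 => if k == 0 then 1 else 0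
  | n'.+1 => (k ^ 2 + k) * LS n' k + (if k is k'.+1 then LS n' k' else 0)
  end.

(* log-concavity of a nat-indexed sequence, with a_(-1) = 0 (so the k = 0
   instance is trivial and is omitted). *)
Definition log_concave (a : nat -> nat) : Prop :=
  forall k, a k * a k.+2 <= a k.+1 ^ 2.

(* Main.v *)
Require Import Defs.
From mathcomp Require Import all_boot zify.
From mathcomp Require Import all_algebra ring.

Lemma LS_pos n k : 0 < LS n k <-> (k <= n /\ (0 < k \/ n = 0)).
Proof.
elim: n k => [|n IH] [|k] /=.
- lia.
- lia.
- rewrite mul0n add0n; lia.
- have Hx : 0 < (k.+1 ^ 2 + k.+1) by rewrite addn_gt0 ltn0Sn orbT.
  rewrite addn_gt0 muln_gt0 Hx /=.
  split.
  + move=> /orP [/IH [H1 _]|/IH [H1 _]]; (split; [|by left]).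
    - exact: ltnW.
    - exact: H1.
  + move=> [H _]; case: (ltnP k n) => Hk.
    * apply/orP; left; apply/IH; split => //; by left.
    * apply/orP; right; apply/IH; have Ek : k = n by apply/eqP; rewrite eqn_leq Hk -ltnS H.
      subst k; split => //; case: (posnP n) => [->|Hn]; [by right|by left].
Qed.

Lemma LS_zero n k : LS n k = 0 -> (forall j, j <= k -> LS n j = 0) \/ (forall j, k <= j -> LS n j = 0).
Proof.
move=> H.
have H' : ~ (k <= n /\ (0 < k \/ n = 0)) by rewrite -LS_pos H.
have Z j : ~ (j <= n /\ (0 < j \/ n = 0)) -> LS n j = 0.
  by move=> Hj; apply/eqP; rewrite eqn0Ngt; apply/negP => /LS_pos.
case: (leqP k n) => Hkn.
- left => j Hj; apply: Z; lia.
- right => j Hj; apply: Z; lia.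
Qed.
Lemma core k a b c d : (k+2)*a*c <= k*b^2 -> (k+3)*b*d <= (k+1)*c^2 -> (k+2)*(k+3)*a*d <= k*(k+1)*b*c ->
 (k+3) * ((k^2+k)*b + a) * (((k+2)^2+(k+2))*d + c) <= (k+1) * (((k+1)^2+(k+1))*c + b)^2.
Proof.
move=> H1 H2 H3.
set X := (k^2+k)*((k+2)^2+(k+2)).
have E1 := leq_mul (leqnn ((k+2)*X)) H2.
have E2 := leq_mul (leqnn ((k+2)^2+(k+2))) H3.
have E3 := leq_mul (leqnn (k+3)) H1.
rewrite -(@leq_pmul2l (k+2)); last by rewrite addn2.
have ->: (k+2) * ((k+3) * ((k^2+k)*b + a) * (((k+2)^2+(k+2))*d + c)) =
  (k+2)*X*((k+3)*b*d) + (k+2)*(k+3)*(k^2+k)*b*c + ((k+2)^2+(k+2))*((k+2)*(k+3)*a*d) + (k+3)*((k+2)*a*c).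
  rewrite /X; ring.
have ->: (k+2) * ((k+1) * (((k+1)^2+(k+1))*c + b)^2) =
  ((k+2)*X*((k+1)*c^2) + (k+2)*(k+3)*(k^2+k)*b*c + ((k+2)^2+(k+2))*(k*(k+1)*b*c) + (k+3)*(k*b^2))
  + 2*((k+1)*(k+2)*c+b)^2.
  rewrite /X; ring.
apply: leq_trans (leq_addr _ _).
by rewrite !leq_add.
Qed.

Lemma core' k a b c d : k.+2*a*c <= k*b^2 -> k.+3*b*d <= k.+1*c^2 -> k.+2*k.+3*a*d <= k*k.+1*b*c ->
 k.+3 * ((k^2+k)*b + a) * ((k.+2^2+k.+2)*d + c) <= k.+1 * ((k.+1^2+k.+1)*c + b)^2.
Proof. have := @core k a b c d. by rewrite !addn1 !addn2 !addn3. Qed.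

Definition Pinv n := forall k, k.+3 * LS n k * LS n k.+2 <= k.+1 * LS n k.+1 ^ 2.

Lemma Pinv_all n : Pinv n.
Proof.
elim: n => [|n IH] k.
  by rewrite /= muln0.
case: k => [|j].
  by rewrite /= muln0 mul0n.
have H1 := IH j.
have H2 := IH j.+1.
have H3 : j.+3 * j.+4 * LS n j * LS n j.+3 <= j.+1 * j.+2 * LS n j.+1 * LS n j.+2.
  case: (posnP (LS n j.+1)) => [Z|Pb].
    case: (@LS_zero _ _ Z) => Hz; first by rewrite (Hz j (leqnSn _)) ?muln0 ?mul0n.
    by rewrite (Hz j.+3 (leq_trans (leqnSn _) (leqnSn _))) ?muln0 ?mul0n.
  case: (posnP (LS n j.+2)) => [Z|Pc].
    case: (@LS_zero _ _ Z) => Hz; first by rewrite (Hz j (leq_trans (leqnSn _) (leqnSn _))) ?muln0 ?mul0n.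
    by rewrite (Hz j.+3 (leqnSn _)) ?muln0 ?mul0n.
  have Pbc : 0 < LS n j.+1 * LS n j.+2 by rewrite muln_gt0 Pb Pc.
  rewrite -(leq_pmul2l Pbc).
  have := leq_mul H1 H2.
  set a := LS n j; set b := LS n j.+1; set c := LS n j.+2; set d := LS n j.+3.
  move=> H; apply: leq_trans _ (leq_trans H _); apply/eq_leq; ring.
exact: (@core' _ _ _ _ _ H1 H2 H3).
Qed.

Theorem mainTheorem6 : forall n : nat, log_concave (LS n).
Proof.
move=> n k.
have H := Pinv_all n k.
have : k.+1 * (LS n k * LS n k.+2) <= k.+1 * LS n k.+1 ^ 2.
  apply: leq_trans H; rewrite mulnA leq_mul2r leq_mul2r.
  by rewrite ltnS ltnW ?orbT.
by rewrite leq_pmul2l.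
Qed.
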